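(* Let $A=(a_{ij})_{1\le i,j\le n}$ be a real Nekrasov matrix with $a_{ii}>0$ for all $i$. Let $k$ be the smallest index such that $a_{kj}=0$ for all $j>k$, and let $\epsilon_1,\dots,\epsilon_n$ be real numbers with $\epsilon_i=0$ for $i<k$ and, for $i=k,\dots,n$, $0<\epsilon_i<a_{ii}-h_i(A)$ and $\epsilon_i>\sum_{j=k}^{i-1}\frac{|a_{ij}|\epsilon_j}{a_{jj}}$. Let $s_i:=\frac{h_i(A)+\epsilon_i}{a_{ii}}$, $w_i:=\sum_{j=1}^{i-1}|a_{ij}|\frac{\epsilon_j}{a_{jj}}$ and $p_i:=\sum_{j=i+1}^{n}|a_{ij}|\frac{a_{jj}-h_j(A)-\epsilon_j}{a_{jj}}$ for $i\in N$. Then $$\max_{d\in[0,1]^n}\|(I-D+DA)^{-1}\|_\infty\le \max\left\{\frac{1}{\min_{i}(\epsilon_i-w_i+p_i)},\ \frac{1}{\min_i s_i}\right\},$$ where for $d=(d_1,\dots,d_n)\in[0,1]^n$, $D=\mathrm{diag}(d_1,\dots,d_n)$ and $I$ is the $n\times n$ identity matrix.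
   Context: For a real $n\times n$ matrix $A=(a_{ij})$ with $a_{ii}\ne 0$ for all $i$, define recursively $h_1(A):=\sum_{j\ne 1}|a_{1j}|$ and $h_i(A):=\sum_{j=1}^{i-1}|a_{ij}|\frac{h_j(A)}{|a_{jj}|}+\sum_{j=i+1}^{n}|a_{ij}|$ for $i=2,\dots,n$. $A$ is a Nekrasov matrix if $|a_{ii}|>h_i(A)$ for all $i\in N=\{1,\dots,n\}$. $\|\cdot\|_\infty$ is the maximum absolute row sum norm. (The matrices $I-D+DA$ are nonsingular for all such $D$.) *)

(* Defs.v *)
(* Indices are 0-based: row/column i : 'I_n corresponds to i+1 in the paper. *)
From HB Require Import structures.
From mathcomp Require Import all_boot all_order all_algebra.
Set Implicit Arguments. Unset Strict Implicit. Unset Printing Implicit Defensive.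
Import Order.TTheory GRing.Theory Num.Theory.
Local Open Scope ring_scope.

Section Nekrasov.
Variable R : realFieldType.
Variable n : nat.
Implicit Types (A : 'M[R]_n).

(* h_i(A) given the already computed values prev = [h_0; ...; h_{i-1}] :
   h_i = sum_{j<i} |a_ij| h_j / |a_jj| + sum_{j>i} |a_ij| *)
Definition h_step A (i : 'I_n) (prev : seq R) : R :=
  \sum_(j < n | (j < i)%N) `|A i j| * prev`_j / `|A j j|
  + \sum_(j < n | (i < j)%N) `|A i j|.

Definition h_seq A : seq R :=
  foldl (fun prev i => rcons prev (h_step A i prev)) [::] (enum 'I_n).

Definition nek_h A (i : 'I_n) : R := (h_seq A)`_i.

Definition is_Nekrasov A : Prop :=
  (forall i : 'I_n, A i i != 0) /\ (forall i : 'I_n, nek_h A i < `|A i i|).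

Definition norm_inf (B : 'M[R]_n) : R :=
  \big[Num.max/0]_(i < n) \sum_(j < n) `|B i j|.

End Nekrasov.

Definition min_ord (R : realFieldType) (n : nat) (F : 'I_n.+1 -> R) : R :=
  \big[Num.min/F ord0]_(i < n.+1) F i.

(* Main.v *)
Require Import Defs.
From HB Require Import structures.
From mathcomp Require Import all_boot all_order all_algebra.
Import Order.TTheory GRing.Theory Num.Theory.
From mathcomp Require Import ring lra.
Local Open Scope ring_scope.

Lemma foldl_rc (U T : Type) (u0 : U) (t0 : T) (f : seq U -> T -> U) (l : seq T) (p : seq U) :
  let r := foldl (fun prev i => rcons prev (f prev i)) p l in
  [/\ size r = (size p + size l)%N,
      forall j, (j < size l)%N -> nth u0 r (size p + j) = f (take (size p + j) r) (nth t0 l j)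
    & take (size p) r = p].
Proof.
elim: l p => [|x l IH] p /=.
  by rewrite addn0 take_size; split.
set p' := rcons p (f p x).
have [H1 H2 H3] := IH p'.
have sp : size p' = (size p).+1 by rewrite size_rcons.
rewrite sp in H1 H2 H3.
have H3' : take (size p) (foldl (fun prev i => rcons prev (f prev i)) p' l) = p.
  by rewrite -(take_takel _ (leqnSn (size p))) H3 /p' -cats1 take_size_cat.
split => //.
- by rewrite H1 addSnnS.
- case => [|j] Hj.
  + rewrite addn0 H3' -(nth_take _ (ltnSn (size p))) H3 /p' nth_rcons ltnn eqxx //.
  + by rewrite -addSnnS H2.
Qed.

Lemma nek_h_rec (R : realFieldType) (n : nat) (A : 'M[R]_n) (i : 'I_n) :
  nek_h A i = \sum_(j < n | (j < i)%N) `|A i j| * nek_h A j / `|A j j|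
            + \sum_(j < n | (i < j)%N) `|A i j|.
Proof.
have [H1 H2 _] := @foldl_rc _ _ 0 i (fun p i => h_step A i p) (enum 'I_n) [::].
rewrite /= size_enum_ord in H1 H2.
rewrite /nek_h /h_seq -[nat_of_ord i]/(0 + i)%N H2 // nth_ord_enum /h_step.
congr (_ + _); apply: eq_bigr => j Hj.
by rewrite /= nth_take.
Qed.

Lemma core (R : realFieldType) m (M : 'M[R]_m.+1) (s : 'I_m.+1 -> R) (g : R) :
  0 <= g ->
  (forall j, 0 < s j <= 1) ->
  (forall i, g <= M i i * s i - \sum_(j < m.+1 | j != i) `|M i j| * s j) ->
  forall y : 'cV[R]_m.+1, exists i0, forall i, g * `|y i 0| <= `|(M *m y) i0 0|.
Proof.
move=> g0 Hs HM y.
pose z i := `|y i 0| / s i.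
case: (@arg_maxP _ R _ ord0 predT z isT) => i1 _ Hi0.
exists i1 => i.
have Hz : forall j, `|y j 0| <= s j * z i1.
  move=> j; have := Hi0 j isT; rewrite /z /=.
  have [sp _] := andP (Hs j).
  by rewrite ler_pdivrMr // mulrC.
have [sp1 _] := andP (Hs i1).
have zi1 : 0 <= z i1 by rewrite /z divr_ge0 // ltW.
apply: (@le_trans _ _ (g * z i1)).
  have [sp s1] := andP (Hs i).
  apply: ler_wpM2l => //; apply: le_trans (Hz i) _.
  by rewrite ler_piMl.
rewrite mxE (bigD1 i1) //=.
apply: le_trans (lerB_normD _ _).
apply: (@le_trans _ _ (`|M i1 i1 * y i1 0| - \sum_(j < m.+1 | j != i1) `|M i1 j| * `|y j 0|)); last first.
  by rewrite lerB // (le_trans (ler_norm_sum _ _ _)) // ler_sum // => j _; rewrite normrM.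
have e1 : `|y i1 0| = s i1 * z i1 by rewrite /z mulrC divfK // gt_eqF.
apply: (@le_trans _ _ (z i1 * (M i1 i1 * s i1 - \sum_(j < m.+1 | j != i1) `|M i1 j| * s j))).
  by rewrite mulrC; apply: ler_wpM2l.
rewrite mulrBr; apply: lerB.
  rewrite normrM e1 mulrCA mulrA (mulrC (s i1)) -mulrA; apply: ler_wpM2r.
    by rewrite mulr_ge0 // ltW.
  exact: real_ler_norm (num_real _).
rewrite mulr_sumr ler_sum // => j _.
by rewrite mulrCA ler_wpM2l // mulrC Hz.
Qed.

Lemma rowbound (R : realFieldType) m (M : 'M[R]_m.+1) (s : 'I_m.+1 -> R) (g : R) :
  0 < g ->
  (forall j, 0 < s j <= 1) ->
  (forall i, g <= M i i * s i - \sum_(j < m.+1 | j != i) `|M i j| * s j) ->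
  M \in unitmx /\ forall i, \sum_j `|invmx M i j| <= 1 / g.
Proof.
move=> g0 Hs HM.
have C := @core _ _ _ _ _ (ltW g0) Hs HM.
have Mu : M \in unitmx.
  rewrite unitmxE unitfE -det_tr; apply/negP => /det0P [v vn0 vM].
  have [i0 Hi0] := C v^T.
  move: vn0.
  have E : M *m v^T = 0 by rewrite -[M]trmxK -trmx_mul vM trmx0.
  rewrite E in Hi0.
  move=> /negP; apply; apply/eqP/matrixP => i j.
  rewrite !mxE (ord1 i); have := Hi0 j; rewrite !mxE normr0.
  by rewrite pmulr_rle0 // normr_le0 => /eqP.
split => // i.
pose x : 'cV[R]_m.+1 := \col_j Num.sg (invmx M i j).
have [i0 Hi0] := C (invmx M *m x).
rewrite mulmxA mulmxV // mul1mx in Hi0.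
have := Hi0 i; rewrite !mxE.
have -> : \sum_j invmx M i j * x j 0 = \sum_j `|invmx M i j|.
  by apply: eq_bigr => j _; rewrite mxE mulrC -normrEsg.
rewrite ger0_norm ?sumr_ge0 // => H.
rewrite ler_pdivlMr // mulrC (le_trans H) // normr_sg.
by case: (_ != 0).
Qed.

Lemma split_ne (R : realFieldType) m (i : 'I_m) (F : 'I_m -> R) :
  \sum_(j < m | j != i) F j = \sum_(j < m | (j < i)%N) F j + \sum_(j < m | (i < j)%N) F j.
Proof.
rewrite !(big_mkcond (fun j => _ != _)) !(big_mkcond (fun j => (_ < _)%N)) -big_split.
apply: eq_bigr => j _ /=.
have -> : (j != i) = ((j:nat) != i) by [].
case: (ltngtP j i) => H.
- by rewrite addr0.
- by rewrite add0r.
- by rewrite addr0.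
Qed.

Theorem theorem5p2 (R : realFieldType) (n : nat) (A : 'M[R]_n.+1)
  (k : 'I_n.+1) (eps : 'I_n.+1 -> R) :
  is_Nekrasov A ->
  (forall i : 'I_n.+1, 0 < A i i) ->
  (* k is the smallest index such that a_kj = 0 for all j > k *)
  (forall j : 'I_n.+1, (k < j)%N -> A k j = 0) ->
  (forall i : 'I_n.+1, (i < k)%N -> exists j : 'I_n.+1, (i < j)%N /\ A i j != 0) ->
  (forall i : 'I_n.+1, (i < k)%N -> eps i = 0) ->
  (forall i : 'I_n.+1, (k <= i)%N ->
     [/\ 0 < eps i, eps i < A i i - nek_h A i &
         \sum_(j < n.+1 | (k <= j < i)%N) `|A i j| * eps j / A j j < eps i]) ->
  let s := fun i : 'I_n.+1 => (nek_h A i + eps i) / A i i in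
  let w := fun i : 'I_n.+1 =>
    \sum_(j < n.+1 | (j < i)%N) `|A i j| * (eps j / A j j) in
  let p := fun i : 'I_n.+1 =>
    \sum_(j < n.+1 | (i < j)%N) `|A i j| * ((A j j - nek_h A j - eps j) / A j j) in
  forall d : 'rV[R]_n.+1,
    (forall i : 'I_n.+1, 0 <= d 0 i <= 1) ->
    norm_inf (invmx (1%:M - diag_mx d + diag_mx d *m A))
      <= Num.max (1 / min_ord (fun i => eps i - w i + p i))
                 (1 / min_ord s).
Proof.
move=> [Hnz Hlt] Hpos _ Hex Heps0 Heps s w p d Hd.
have nA : forall j, `|A j j| = A j j by move=> j; rewrite ger0_norm // ltW.
have hge0 : forall j, 0 <= nek_h A j.
  suff : forall N (j : 'I_n.+1), (j < N)%N -> 0 <= nek_h A j by move=> H j; exact: (H j.+1).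
  elim=> [|N IH] j //= Hj.
  rewrite nek_h_rec addr_ge0 // sumr_ge0 // => l Hl.
  by rewrite divr_ge0 // mulr_ge0 // IH // (leq_trans Hl).
have He : forall j, 0 <= eps j /\ eps j < A j j - nek_h A j.
  move=> j; case: (leqP k j) => Hkj.
    by have [H1 H2 _] := Heps j Hkj; split => //; apply: ltW.
  by rewrite Heps0 // lexx subr_gt0 -nA Hlt.
have Hs : forall j, 0 < s j <= 1.
  move=> j; have [e0 e1] := He j.
  rewrite /s /= ler_pdivrMr // mul1r (_ : _ <= A j j) ?andbT; last by lra.
  rewrite divr_gt0 //.
  case: (leqP k j) => Hkj.
    by have [H1 _ _] := Heps j Hkj; rewrite ltr_wpDl.
  rewrite Heps0 // addr0 nek_h_rec ltr_wpDl ?sumr_ge0 // => [l _|].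
    by rewrite divr_ge0 // mulr_ge0.
  have [l [Hl Hal]] := Hex j Hkj.
  rewrite (bigD1 l) //= ltr_wpDr ?sumr_ge0 // normr_gt0 //.
have beta : forall i, A i i * s i - \sum_(j < n.+1 | j != i) `|A i j| * s j = eps i - w i + p i.
  move=> i.
  have -> : A i i * s i = nek_h A i + eps i by rewrite /s /= mulrC divfK.
  rewrite nek_h_rec split_ne /w /p.
  have -> : \sum_(j < n.+1 | (j < i)%N) `|A i j| * s j =
     \sum_(j < n.+1 | (j < i)%N) `|A i j| * nek_h A j / `|A j j| + 
     \sum_(j < n.+1 | (j < i)%N) `|A i j| * (eps j / A j j).
    rewrite -big_split; apply: eq_bigr => j _ /=; rewrite nA /s /=.
    by field; rewrite Hnz.
  have -> : \sum_(j < n.+1 | (i < j)%N) `|A i j| * s j =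
     \sum_(j < n.+1 | (i < j)%N) `|A i j| -
     \sum_(j < n.+1 | (i < j)%N) `|A i j| * ((A j j - nek_h A j - eps j) / A j j).
    rewrite -sumrB; apply: eq_bigr => j _ /=; rewrite /s /=.
    by field; rewrite Hnz.
  ring.
have pge0 : forall i, 0 <= p i.
  move=> i; rewrite /p sumr_ge0 // => j _; rewrite mulr_ge0 // divr_ge0 ?ltW //.
  by have [e0 e1] := He j; lra.
have bpos : forall i, 0 < eps i - w i + p i.
  move=> i; case: (leqP k i) => Hki.
    have [_ _ H3] := Heps i Hki.
    have -> : w i = \sum_(j < n.+1 | (k <= j < i)%N) `|A i j| * eps j / A j j.
      rewrite /w !(big_mkcond (fun j => (_ < _)%N)) (big_mkcond (fun j => (_ <= _ < _)%N)).
      apply: eq_bigr => j _ /=; case: (j < i)%N; rewrite ?andbT ?andbF //.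
      case: (leqP k j) => Hkj; first by rewrite mulrA.
      by rewrite Heps0 // mul0r mulr0.
    by rewrite ltr_wpDr // subr_gt0.
  have -> : w i = 0.
    rewrite /w big1 // => j Hj; rewrite Heps0 ?mul0r ?mulr0 //.
    exact: ltn_trans Hj Hki.
  rewrite Heps0 // subr0 add0r /p.
  have [l [Hl Hal]] := Hex i Hki.
  rewrite (bigD1 l) //= ltr_wpDr ?sumr_ge0 //.
  - move=> j _; rewrite mulr_ge0 // divr_ge0 ?ltW //.
    by have [e0 e1] := He j; lra.
  - rewrite mulr_gt0 ?normr_gt0 // divr_gt0 //.
    by have [e0 e1] := He l; lra.
set m1 := min_ord (fun i => eps i - w i + p i).
set m2 := min_ord s.
have m1p : 0 < m1.
  by rewrite /m1 /min_ord; apply: (big_ind (fun x => 0 < x)) => // x y Hx Hy; rewrite lt_min Hx.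
have m2p : 0 < m2.
  rewrite /m2 /min_ord; apply: (big_ind (fun x => 0 < x)) => [|x y Hx Hy|j _]; first by have /andP[] := Hs ord0.
    by rewrite lt_min Hx.
  by have /andP[] := Hs j.
have m1le : forall i, m1 <= eps i - w i + p i by move=> i; exact: bigmin_le.
have m2le : forall i, m2 <= s i by move=> i; exact: bigmin_le.
set g := Num.min m1 m2.
have gp : 0 < g by rewrite lt_min m1p.
set M := 1%:M - diag_mx d + diag_mx d *m A.
have ME : forall i j, M i j = (if i == j then 1 - d 0 i else 0) + d 0 i * A i j.
  move=> i j; rewrite /M mul_diag_mx !mxE.
  by case: (i == j); rewrite ?mulr1n ?mulr0n ?subr0.
have HM : forall i, g <= M i i * s i - \sum_(j < n.+1 | j != i) `|M i j| * s j.
  move=> i; have /andP[d0 d1] := Hd i.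
  have -> : \sum_(j < n.+1 | j != i) `|M i j| * s j = d 0 i * \sum_(j < n.+1 | j != i) `|A i j| * s j.
    rewrite mulr_sumr; apply: eq_bigr => j Hj; rewrite ME eq_sym (negbTE Hj) add0r.
    by rewrite normrM (ger0_norm d0) /s /= !mulrA.
  have -> : M i i * s i - d 0 i * \sum_(j < n.+1 | j != i) `|A i j| * s j
     = (1 - d 0 i) * s i + d 0 i * (A i i * s i - \sum_(j < n.+1 | j != i) `|A i j| * s j).
    by rewrite ME eqxx; ring.
  rewrite beta.
  have g1 : g <= s i by rewrite /g ge_min m2le orbT.
  have g2 : g <= eps i - w i + p i by rewrite /g ge_min m1le.
  have : (1 - d 0 i) * g <= (1 - d 0 i) * s i by apply: ler_wpM2l; lra.
  have : d 0 i * g <= d 0 i * (eps i - w i + p i) by apply: ler_wpM2l.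
  lra.
have [Mu Hrow] := @rowbound _ _ _ _ _ gp Hs HM.
apply: (@le_trans _ _ (1 / g)).
  rewrite /norm_inf; apply: (big_ind (fun x => x <= 1 / g)) => //.
    by rewrite divr_ge0 // ltW.
  by move=> x y Hx Hy; rewrite ge_max Hx.
rewrite /g minEle; case: ifP => _; by rewrite le_max lexx ?orbT.
Qed.
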